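(* Fix the graph Laplacian $L$ (notation in the context) and the diffusion coefficient $b\neq0$. Let $\tau_0>0$ and $\alpha_\tau\in[0,1)$ with $(1+\alpha_\tau)\tau_0<\pi/(2\lambda_n)$, and for $\lambda>0$ let $f_\lambda(\tau)=\frac{\cos(\lambda\tau)}{\lambda(1-\sin(\lambda\tau))}$. Define $$\varepsilon_\tau^{\pm}=\max_{k\in\{2,\dots,n\}}\frac{\big|f_{\lambda_k}((1\pm\alpha_\tau)\tau_0)-f_{\lambda_k}(\tau_0)\big|}{f_{\lambda_k}(\tau_0)}.$$ Then for every $\tau$ with $(1-\alpha_\tau)\tau_0\le\tau\le(1+\alpha_\tau)\tau_0$, the steady-state covariances satisfy $(1-\varepsilon_\tau^-)\Sigma(\tau_0)\preceq\Sigma(\tau)\preceq(1+\varepsilon_\tau^+)\Sigma(\tau_0)$; i.e., the steady-state distribution of the observables lies in $\mathcal M_\tau=\{\mathcal N(0,\Sigma):(1-\varepsilon_\tau^-)\Sigma_0\preceq\Sigma\preceq(1+\varepsilon_\tau^+)\Sigma_0\}$ with $\Sigma_0=\Sigma(\tau_0)$.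
   Context: Network: $\mathrm d x_t=-L\,x_{t-\tau}\,\mathrm dt+b\,\mathrm d w_t$, $w_t$ standard $n$-dimensional Brownian motion, $L$ the Laplacian of a connected undirected simple graph with positive edge weights, $L=Q\Lambda Q^\top$, $Q=[q_1|\dots|q_n]$ orthogonal, $q_1=\mathbf 1_n/\sqrt n$, $\Lambda=\mathrm{diag}(0,\lambda_2,\dots,\lambda_n)$, $0<\lambda_2\le\dots\le\lambda_n$. For a delay $\tau$ with $0\le\tau<\pi/(2\lambda_n)$, the observables $y=M_nx$, $M_n=I_n-\frac1n\mathbf 1_n\mathbf 1_n^\top$, have steady-state law $\mathcal N(0,\Sigma(\tau))$ with $\Sigma(\tau)=b^2M_nQ\Psi(\tau)Q^\top M_n$, $\Psi(\tau)=\mathrm{diag}\big(0,\tfrac12 f_{\lambda_2}(\tau),\dots,\tfrac12 f_{\lambda_n}(\tau)\big)$. $A\preceq B$ means $B-A$ is positive semidefinite. *)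

(* Defs.v *)
From HB Require Import structures.
From mathcomp Require Import all_boot all_order all_algebra.
From mathcomp Require Import all_classical all_reals all_analysis.
Set Implicit Arguments. Unset Strict Implicit. Unset Printing Implicit Defensive.
Import Order.TTheory GRing.Theory Num.Theory.
Local Open Scope ring_scope.

Section Defs.
Variable R : realType.

Definition f_lam (lam tau : R) : R :=
  cos (lam * tau) / (lam * (1 - sin (lam * tau))).

Definition laplacian (m : nat) (W : 'M[R]_m) : 'M[R]_m :=
  \matrix_(i, j) ((i == j)%:R * (\sum_(k < m) W i k) - W i j).

(* W is the weight matrix of an undirected simple graph with positive
   edge weights: symmetric, nonnegative, zero diagonal (no loops);
   edges are the pairs with W i j > 0. *)
Definition simple_weighted_graph (m : nat) (W : 'M[R]_m) : Prop :=
  [/\ W^T = W, forall i j, 0 <= W i j & forall i, W i i = 0].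

Definition graph_connected (m : nat) (W : 'M[R]_m) : Prop :=
  forall i j : 'I_m, connect [rel a b | 0 < W a b] i j.

Definition centering (m : nat) : 'M[R]_m :=
  1%:M - (m%:R)^-1 *: const_mx 1.

Definition Psi (m : nat) (lam : 'I_m.+1 -> R) (tau : R) : 'M[R]_m.+1 :=
  diag_mx (\row_k (if k == ord0 then 0 else f_lam (lam k) tau / 2)).

Definition Sigma (m : nat) (b : R) (Q : 'M[R]_m.+1) (lam : 'I_m.+1 -> R)
  (tau : R) : 'M[R]_m.+1 :=
  b ^+ 2 *: (centering m.+1 *m Q *m Psi lam tau *m Q^T *m centering m.+1).

Definition psd (m : nat) (A : 'M[R]_m) : Prop :=
  A^T = A /\ forall v : 'rV[R]_m, 0 <= (v *m A *m v^T) 0 0.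

Definition loewner_le (m : nat) (A B : 'M[R]_m) : Prop := psd (B - A).

Definition eps_dev (m : nat) (lam : 'I_m.+1 -> R) (t tau0 : R) : R :=
  \big[Num.max/0]_(k | k != ord0)
     (`|f_lam (lam k) t - f_lam (lam k) tau0| / f_lam (lam k) tau0).

End Defs.

(* Main.v *)
Require Import Defs.
From HB Require Import structures.
From mathcomp Require Import all_boot all_order all_algebra.
From mathcomp Require Import all_classical all_reals all_analysis.
From mathcomp Require Import lra.
Set Implicit Arguments. Unset Strict Implicit.
Import Order.TTheory GRing.Theory Num.Theory.
Local Open Scope ring_scope.

Section H.
Variable R : realType.

Lemma sin_le_mono (x y : R) : 0 <= x -> x <= y -> y < pi/2 -> sin x <= sin y.
Proof.
move=> x0 xy ypi.
have pi0 : 0 < pi / 2 :> R by rewrite divr_gt0 // pi_gt0.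
rewrite le_eqVlt in xy; case/orP: xy => [/eqP->//|xy].
apply/ltW; rewrite ltr_sin // in_itv /=; apply/andP; split; lra.
Qed.

Lemma cos_le_mono (x y : R) : 0 <= x -> x <= y -> y < pi/2 -> cos y <= cos x.
Proof.
move=> x0 xy ypi.
have pi0 : 0 < pi / 2 :> R by rewrite divr_gt0 // pi_gt0.
have pi2 : pi / 2 < pi :> R by rewrite ltr_pdivrMr // ltr_pMr ?pi_gt0 // ltr1n.
rewrite le_eqVlt in xy; case/orP: xy => [/eqP->//|xy].
apply/ltW; rewrite ltr_cos // in_itv /=; apply/andP; split; lra.
Qed.

Lemma sin_lt1 (y : R) : 0 <= y -> y < pi/2 -> sin y < 1.
Proof.
move=> y0 ypi.
have pi0 : 0 < pi / 2 :> R by rewrite divr_gt0 // pi_gt0.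
rewrite -sin_pihalf ltr_sin // in_itv /=; apply/andP; split; lra.
Qed.

Lemma cos_gt0' (y : R) : 0 <= y -> y < pi/2 -> 0 < cos y.
Proof. move=> y0 ypi; apply: cos_gt0_pihalf; apply/andP; split => //.
have pi0 : 0 < pi / 2 :> R by rewrite divr_gt0 // pi_gt0. lra. Qed.

Lemma g_mono (x y : R) : 0 <= x -> x <= y -> y < pi/2 ->
  cos x / (1 - sin x) <= cos y / (1 - sin y).
Proof.
move=> x0 xy ypi.
have sxy := sin_le_mono x0 xy ypi.
have cxy := cos_le_mono x0 xy ypi.
have y0 : 0 <= y by lra.
have sy1 := sin_lt1 y0 ypi.
have sx1 : sin x < 1 by lra.
have cy0 := cos_gt0' y0 ypi.
have cx0 : 0 < cos x by lra.
have sx0 : 0 <= sin x by apply: sin_ge0_pi; apply/andP; split=>//;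
  have := pi_gt0 R; lra.
have e1 := cos2Dsin2 x. have e2 := cos2Dsin2 y.
have alt : forall z : R, 0 < cos z -> sin z < 1 -> cos z / (1 - sin z) = (1 + sin z) / cos z.
  move=> z cz sz.
  have c0 : cos z != 0 by rewrite gt_eqF.
  have s0 : 1 - sin z != 0 by rewrite gt_eqF // subr_gt0.
  apply/eqP; rewrite eqr_div //; apply/eqP.
  have := cos2Dsin2 z; rewrite !expr2 => h.
  rewrite mulrDl !mulrBr !mul1r mulr1; lra.
rewrite !alt // ler_pdivrMr // mulrAC ler_pdivlMr //.
apply: ler_pM; lra.
Qed.
Lemma psd_diag_form m (P : 'M[R]_m) (d : 'rV[R]_m) (a : R) :
  0 <= a -> (forall k, 0 <= d 0 k) -> psd (a *: (P *m diag_mx d *m P^T)).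
Proof.
move=> a0 d0; split.
  by rewrite linearZ /= !trmx_mul trmxK tr_diag_mx mulmxA.
move=> v; rewrite -scalemxAr -scalemxAl mxE; apply: mulr_ge0 => //.
have -> : v *m (P *m diag_mx d *m P^T) *m v^T =
   (v *m P) *m diag_mx d *m (v *m P)^T by rewrite trmx_mul !mulmxA.
rewrite mul_mx_diag mxE; apply: sumr_ge0 => k _; rewrite !mxE.
by rewrite mulrAC -expr2 mulr_ge0 // sqr_ge0.
Qed.

Lemma centering_sym m : (centering R m)^T = centering R m.
Proof. by rewrite /centering linearB /= linearZ /= trmx_const tr_scalar_mx. Qed.

Lemma Sigma_eq n b (Q : 'M[R]_n.+1) lam t :
  Sigma b Q lam t = b ^+ 2 *: ((centering R n.+1 *m Q) *m Psi lam t *m (centering R n.+1 *m Q)^T).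
Proof. by rewrite /Sigma trmx_mul centering_sym !mulmxA. Qed.

Lemma Sigma_diff n b (Q : 'M[R]_n.+1) lam t1 t2 a c :
  a *: Sigma b Q lam t1 - c *: Sigma b Q lam t2 =
  b ^+ 2 *: ((centering R n.+1 *m Q) *m
     diag_mx (\row_k (if k == ord0 then 0 else (a * f_lam (lam k) t1 - c * f_lam (lam k) t2) / 2))
     *m (centering R n.+1 *m Q)^T).
Proof.
have -> : diag_mx (\row_k (if k == ord0 then 0 else (a * f_lam (lam k) t1 - c * f_lam (lam k) t2) / 2))
   = a *: Psi lam t1 - c *: Psi lam t2.
  apply/matrixP => i j; rewrite !mxE.
  case: (i == j); rewrite ?mulr1n ?mulr0n ?mulr0 ?subr0 //.
  case: (i == ord0); rewrite ?mulr0 ?subr0 //; lra.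
rewrite !Sigma_eq; set P := centering R n.+1 *m Q.
by rewrite mulmxBr mulmxBl -!scalemxAr -!scalemxAl scalerBr !scalerA (mulrC a) (mulrC c).

Qed.

Lemma le_bigmax_seq (I : eqType) (r : seq I) (P : pred I) (F : I -> R) k :
  k \in r -> P k -> F k <= \big[Num.max/0]_(i <- r | P i) F i.
Proof.
elim: r => // x r IH; rewrite inE big_cons => /orP [/eqP<-|kr] Pk.
  by rewrite Pk le_max lexx.
case: (P x); last exact: IH.
by rewrite le_max IH ?orbT.
Qed.

Lemma le_eps n (lam : 'I_n.+1 -> R) t t0 k : k != ord0 ->
  `|f_lam (lam k) t - f_lam (lam k) t0| / f_lam (lam k) t0 <= eps_dev lam t t0.
Proof.
move=> k0; rewrite /eps_dev.
exact: (le_bigmax_seq (fun i => `|f_lam (lam i) t - f_lam (lam i) t0| / f_lam (lam i) t0) (mem_index_enum k) k0).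
Qed.

Lemma fE (l t : R) : f_lam l t = cos (l * t) / (1 - sin (l * t)) / l.
Proof. by rewrite /f_lam invfM mulrA mulrAC. Qed.

Lemma f_mono (l s t : R) : 0 < l -> 0 <= s -> s <= t -> l * t < pi / 2 ->
  f_lam l s <= f_lam l t.
Proof.
move=> l0 s0 st lt; rewrite !fE; apply: ler_wpM2r; first by rewrite invr_ge0 ltW.
apply: g_mono => //; first exact: mulr_ge0 (ltW l0) s0.
by rewrite ler_pM2l.
Qed.

Lemma f_pos (l t : R) : 0 < l -> 0 <= t -> l * t < pi / 2 -> 0 < f_lam l t.
Proof.
move=> l0 t0 lt; have x0 : 0 <= l * t by exact: mulr_ge0 (ltW l0) t0.
rewrite fE divr_gt0 // divr_gt0 ?cos_gt0' // subr_gt0 sin_lt1 //.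
Qed.

End H.

Theorem proposition2 (R : realType) (n : nat) (W : 'M[R]_n.+1)
  (Q : 'M[R]_n.+1) (lam : 'I_n.+1 -> R) (b tau0 alpha : R) :
  simple_weighted_graph W ->
  graph_connected W ->
  Q *m Q^T = 1%:M ->
  laplacian W = Q *m diag_mx (\row_k lam k) *m Q^T ->
  (forall i, Q i ord0 = (Num.sqrt (n.+1)%:R)^-1) ->
  lam ord0 = 0 ->
  (forall k, k != ord0 -> 0 < lam k) ->
  (forall i j : 'I_n.+1, (i <= j)%N -> lam i <= lam j) ->
  b != 0 ->
  0 < tau0 ->
  0 <= alpha < 1 ->
  (1 + alpha) * tau0 < pi / (2 * lam ord_max) ->
  forall tau, (1 - alpha) * tau0 <= tau <= (1 + alpha) * tau0 ->
    loewner_le ((1 - eps_dev lam ((1 - alpha) * tau0) tau0) *: Sigma b Q lam tau0)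
               (Sigma b Q lam tau) /\
    loewner_le (Sigma b Q lam tau)
               ((1 + eps_dev lam ((1 + alpha) * tau0) tau0) *: Sigma b Q lam tau0).
Proof.
move=> _ _ _ _ _ lam0 lampos lammono b0 tau0pos /andP[a0 a1] hpi tau /andP[tl tu].
set tm := (1 - alpha) * tau0 in tl *; set tp := (1 + alpha) * tau0 in hpi tu *.
have tm0 : 0 < tm by rewrite mulr_gt0 // subr_gt0.
have tmt0 : tm <= tau0 by rewrite /tm; nra.
have t0tp : tau0 <= tp by rewrite /tp; nra.
have key : forall k, k != ord0 -> forall t, 0 <= t -> t <= tp -> lam k * t < pi / 2.
  move=> k k0 t t0 ttp.
  have lk := lampos k k0.
  have lkm : lam k <= lam ord_max by apply: lammono; exact: leq_ord.
  have lm0 : 0 < lam ord_max by exact: lt_le_trans lkm.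
  rewrite ltr_pdivlMr ?mulr_gt0 // in hpi.
  have h : lam k * t <= lam ord_max * tp by apply: ler_pM => //; exact: ltW.
  rewrite ltr_pdivlMr //; nra.
have tau0' : 0 <= tau by lra.
split; rewrite /loewner_le.
- rewrite -[Sigma b Q lam tau]scale1r Sigma_diff; apply: psd_diag_form.
    exact: sqr_ge0.
  move=> k; rewrite mxE; case: ifP => [_|/negbT k0] //.
  apply: divr_ge0 => //.
  have lk := lampos k k0.
  have fmt : f_lam (lam k) tm <= f_lam (lam k) tau.
    by apply: f_mono => //; [exact: ltW | exact: key].
  have fm0 : f_lam (lam k) tm <= f_lam (lam k) tau0.
    by apply: f_mono => //; [exact: ltW | apply: key => //; exact: ltW].
  have f0 : 0 < f_lam (lam k) tau0 by apply: f_pos => //; [exact: ltW | apply: key => //; exact: ltW].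
  have e := le_eps lam tm tau0 k0; rewrite ler_pdivrMr // in e.
  have nn : f_lam (lam k) tau0 - f_lam (lam k) tm <= `|f_lam (lam k) tm - f_lam (lam k) tau0|.
    by rewrite distrC; exact: ler_norm.
  nra.
- rewrite -[X in _ - X]scale1r Sigma_diff; apply: psd_diag_form.
    exact: sqr_ge0.
  move=> k; rewrite mxE; case: ifP => [_|/negbT k0] //.
  apply: divr_ge0 => //.
  have lk := lampos k k0.
  have fmt : f_lam (lam k) tau <= f_lam (lam k) tp.
    apply: f_mono => //; apply: key => //; lra.
  have fm0 : f_lam (lam k) tau0 <= f_lam (lam k) tp.
    by apply: f_mono => //; [exact: ltW | apply: key => //; lra].
  have f0 : 0 < f_lam (lam k) tau0 by apply: f_pos => //; [exact: ltW | apply: key => //; exact: ltW].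
  have e := le_eps lam tp tau0 k0; rewrite ler_pdivrMr // in e.
  have nn : f_lam (lam k) tp - f_lam (lam k) tau0 <= `|f_lam (lam k) tp - f_lam (lam k) tau0|.
    exact: ler_norm.
  nra.
Qed.
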